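(* Let $D_1,D_2\in B(\ell^2)$ be the diagonal operators $D_1(x_1,x_2,\ldots)=(2^{-1}x_1,2^{-2}x_2,\ldots)$ and $D_2(x_1,x_2,\ldots)=(2^{-2}x_1,2^{-4}x_2,\ldots)$ (i.e. diagonals $2^{-n}$ and $2^{-2n}$). Then $I_{D_1}=I_{D_2}$, but $D_1$ and $D_2$ are not equivalent after extension. In particular, for compact operators, generating the same operator ideal does not imply equivalence after extension.
   Context: $\ell^2=\ell^2(\mathbb N)$ over $\mathbb C$; $B(X,Y)$ denotes bounded linear operators. $X\oplus Y$ is the $\ell^2$-direct sum, $\mathrm{id}_X$ the identity. Operators $T\in B(X)$ and $S\in B(Y)$ are equivalent after extension if there exist Banach spaces $X'$, $Y'$ and invertible (boundedly) operators $E\in B(Y\oplus Y',X\oplus X')$ and $F\in B(X\oplus X',Y\oplus Y')$ with $\begin{bmatrix}T&0\\0&\mathrm{id}_{X'}\end{bmatrix}=E\begin{bmatrix}S&0\\0&\mathrm{id}_{Y'}\end{bmatrix}F$. For $T\in B(X,Y)$ and Banach spaces $Z_1,Z_2$, $I_T(Z_1,Z_2)=\bigcup_{n\in\mathbb N}\{\sum_{j=1}^n R_jTR_j' : R_j\in B(Y,Z_2),\ R_j'\in B(Z_1,X)\}$ and $I_T=\bigcup_{Z_1,Z_2}I_T(Z_1,Z_2)$; $I_T=I_S$ means equality of these sets for all $Z_1,Z_2$. *)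

(* Defs.v *)
From Stdlib Require Import Reals Lra Psatz.
Open Scope R_scope.

Record C := mkC { Cre : R; Cim : R }.
Definition C0 : C := mkC 0 0.
Definition C1 : C := mkC 1 0.
Definition Cadd (a b : C) : C := mkC (Cre a + Cre b) (Cim a + Cim b).
Definition Copp (a : C) : C := mkC (- Cre a) (- Cim a).
Definition Cmul (a b : C) : C :=
  mkC (Cre a * Cre b - Cim a * Cim b) (Cre a * Cim b + Cim a * Cre b).
Definition Cn2 (a : C) : R := Cre a * Cre a + Cim a * Cim a.
Definition Cmod (a : C) : R := sqrt (Cn2 a).
Definition Crs (r : R) (a : C) : C := mkC (r * Cre a) (r * Cim a).

Record NSpace := mkNSpace {
  car :> Type;
  vzero : car;
  vadd : car -> car -> car;
  vopp : car -> car;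
  vscal : C -> car -> car;
  vnorm : car -> R }.
Arguments vzero {_}.
Arguments vadd {_}.
Arguments vopp {_}.
Arguments vscal {_}.
Arguments vnorm {_}.

Definition is_vector_space (X : NSpace) : Prop :=
  (forall x y z : X, vadd x (vadd y z) = vadd (vadd x y) z) /\
  (forall x y : X, vadd x y = vadd y x) /\
  (forall x : X, vadd x vzero = x) /\
  (forall x : X, vadd x (vopp x) = vzero) /\
  (forall (a b : C) (x : X), vscal a (vscal b x) = vscal (Cmul a b) x) /\
  (forall x : X, vscal C1 x = x) /\
  (forall (a : C) (x y : X), vscal a (vadd x y) = vadd (vscal a x) (vscal a y)) /\
  (forall (a b : C) (x : X), vscal (Cadd a b) x = vadd (vscal a x) (vscal b x)).

Definition is_norm (X : NSpace) : Prop :=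
  (forall x : X, 0 <= vnorm x) /\
  (forall x : X, vnorm x = 0 -> x = vzero) /\
  (forall (a : C) (x : X), vnorm (vscal a x) = Cmod a * vnorm x) /\
  (forall x y : X, vnorm (vadd x y) <= vnorm x + vnorm y).

Definition complete (X : NSpace) : Prop :=
  forall u : nat -> X,
    (forall eps, 0 < eps -> exists N, forall m n, (N <= m)%nat -> (N <= n)%nat ->
        vnorm (vadd (u m) (vopp (u n))) < eps) ->
    exists l : X, forall eps, 0 < eps -> exists N, forall n, (N <= n)%nat ->
        vnorm (vadd (u n) (vopp l)) < eps.

Definition Banach (X : NSpace) : Prop := is_vector_space X /\ is_norm X /\ complete X.

Definition linear {X Y : NSpace} (f : X -> Y) : Prop :=
  (forall x y, f (vadd x y) = vadd (f x) (f y)) /\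
  (forall a x, f (vscal a x) = vscal a (f x)).

Definition bounded {X Y : NSpace} (f : X -> Y) : Prop :=
  exists M, forall x, vnorm (f x) <= M * vnorm x.

Definition BL {X Y : NSpace} (f : X -> Y) : Prop := linear f /\ bounded f.

Definition BL_invertible {X Y : NSpace} (f : X -> Y) : Prop :=
  BL f /\ exists g : Y -> X, BL g /\ (forall x, g (f x) = x) /\ (forall y, f (g y) = y).

Definition dsum (X Y : NSpace) : NSpace :=
  mkNSpace (X * Y) (vzero, vzero)
    (fun p q => (vadd (fst p) (fst q), vadd (snd p) (snd q)))
    (fun p => (vopp (fst p), vopp (snd p)))
    (fun a p => (vscal a (fst p), vscal a (snd p)))
    (fun p => sqrt (vnorm (fst p) ^ 2 + vnorm (snd p) ^ 2)).

Definition ext_op {X X' : NSpace} (T : X -> X) : dsum X X' -> dsum X X' :=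
  fun p => (T (fst p), snd p).

Definition equiv_after_ext {X Y : NSpace} (T : X -> X) (S : Y -> Y) : Prop :=
  exists (X' Y' : NSpace), Banach X' /\ Banach Y' /\
  exists (E : dsum Y Y' -> dsum X X') (F : dsum X X' -> dsum Y Y'),
    BL_invertible E /\ BL_invertible F /\
    forall p, @ext_op X X' T p = E (@ext_op Y Y' S (F p)).

Fixpoint vsum {Z : NSpace} (n : nat) (f : nat -> Z) : Z :=
  match n with
  | O => vzero
  | S k => vadd (vsum k f) (f k)
  end.

Definition in_I {X Y : NSpace} (T : X -> Y) (Z1 Z2 : NSpace) (U : Z1 -> Z2) : Prop :=
  exists (n : nat) (R : nat -> Y -> Z2) (R' : nat -> Z1 -> X),
    (forall j, (j < n)%nat -> BL (R j) /\ BL (R' j)) /\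
    forall z, U z = vsum n (fun j => R j (T (R' j z))).

Definition same_ideal {X Y X2 Y2 : NSpace} (T : X -> Y) (S : X2 -> Y2) : Prop :=
  forall Z1 Z2 : NSpace, Banach Z1 -> Banach Z2 ->
    forall U : Z1 -> Z2, in_I T Z1 Z2 U <-> in_I S Z1 Z2 U.

Definition sq_summable (x : nat -> C) : Prop :=
  exists M, forall N, sum_f_R0 (fun n => Cn2 (x n)) N <= M.

Lemma Cn2_ge0 a : 0 <= Cn2 a.
Proof. unfold Cn2; nra. Qed.

Lemma sum_bound (a b e : nat -> R) (c d : R) N :
  (forall n, a n <= c * b n + d * e n) ->
  sum_f_R0 a N <= c * sum_f_R0 b N + d * sum_f_R0 e N.
Proof.
  intros H; induction N as [|N IH]; simpl.
  - apply H.
  - rewrite !Rmult_plus_distr_l. specialize (H (S N)). lra.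
Qed.

Lemma sq_add x y : sq_summable x -> sq_summable y ->
  sq_summable (fun n => Cadd (x n) (y n)).
Proof.
  intros [M HM] [K HK]; exists (2 * M + 2 * K); intros N.
  eapply Rle_trans.
  - apply (sum_bound (fun n => Cn2 (Cadd (x n) (y n))) (fun n => Cn2 (x n)) (fun n => Cn2 (y n)) 2 2).
    intros n; unfold Cn2, Cadd; simpl.
    pose proof (pow2_ge_0 (Cre (x n) - Cre (y n))); pose proof (pow2_ge_0 (Cim (x n) - Cim (y n))); nra.
  - specialize (HM N); specialize (HK N); lra.
Qed.

Lemma sq_scal a x : sq_summable x -> sq_summable (fun n => Cmul a (x n)).
Proof.
  intros [M HM]; exists (Cn2 a * M + 0 * M); intros N.
  eapply Rle_trans.
  - apply (sum_bound (fun n => Cn2 (Cmul a (x n))) (fun n => Cn2 (x n)) (fun n => Cn2 (x n)) (Cn2 a) 0).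
    intros n; unfold Cn2, Cmul; simpl; nra.
  - specialize (HM N); pose proof (Cn2_ge0 a); nra.
Qed.

Lemma sq_zero : sq_summable (fun _ => C0).
Proof.
  exists 0; intros N.
  eapply Rle_trans.
  - apply (sum_bound (fun _ => Cn2 C0) (fun _ => 0) (fun _ => 0) 0 0).
    intros n; unfold Cn2, C0; simpl; nra.
  - lra.
Qed.

Lemma sq_bound_nonempty x : sq_summable x ->
  bound (fun r => exists N, r = sum_f_R0 (fun n => Cn2 (x n)) N) /\
  exists r, (fun r => exists N, r = sum_f_R0 (fun n => Cn2 (x n)) N) r.
Proof.
  intros [M HM]; split.
  - exists M; intros r [N ->]; apply HM.
  - exists (sum_f_R0 (fun n => Cn2 (x n)) 0); exists 0%nat; reflexivity.
Qed.

Definition l2car := { x : nat -> C | sq_summable x }.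

(** ||x||_2 = sqrt (sup_N sum_{n<=N} |x_n|^2) *)
Definition l2norm (x : l2car) : R :=
  sqrt (proj1_sig (completeness _ (proj1 (sq_bound_nonempty _ (proj2_sig x)))
                                  (proj2 (sq_bound_nonempty _ (proj2_sig x))))).

Definition l2 : NSpace :=
  mkNSpace l2car
    (exist _ (fun _ => C0) sq_zero)
    (fun x y => exist _ _ (sq_add _ _ (proj2_sig x) (proj2_sig y)))
    (fun x => exist _ _ (sq_scal (Copp C1) _ (proj2_sig x)))
    (fun a x => exist _ _ (sq_scal a _ (proj2_sig x)))
    l2norm.

Lemma sq_diag (d : nat -> R) (Hd : forall n, 0 <= d n <= 1) x :
  sq_summable x -> sq_summable (fun n => Crs (d n) (x n)).
Proof.
  intros [M HM]; exists (1 * M + 0 * M); intros N.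
  eapply Rle_trans.
  - apply (sum_bound (fun n => Cn2 (Crs (d n) (x n))) (fun n => Cn2 (x n)) (fun n => Cn2 (x n)) 1 0).
    intros n; specialize (Hd n); pose proof (Cn2_ge0 (x n)).
    assert (Hdd : 0 <= 1 - d n * d n) by nra.
    pose proof (Rmult_le_pos _ _ Hdd H).
    unfold Cn2, Crs in *; simpl; nra.
  - specialize (HM N); lra.
Qed.

Definition diag (d : nat -> R) (Hd : forall n, 0 <= d n <= 1) : l2 -> l2 :=
  fun x => exist _ _ (sq_diag d Hd _ (proj2_sig x)).

Lemma half_pow_bounds k : 0 <= (/ 2) ^ k <= 1.
Proof.
  induction k as [|k IH]; simpl; lra.
Qed.

(** Indices are shifted: coordinate x_{n+1} of the paper is (x n) here. *)
Definition D1 : l2 -> l2 := diag (fun n => (/ 2) ^ (S n)) (fun n => half_pow_bounds (S n)).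
Definition D2 : l2 -> l2 :=
  diag (fun n => (/ 2) ^ (2 * S n)) (fun n => half_pow_bounds (2 * S n)).

(* Main.v *)
Require Import Defs.
From Stdlib Require Import Reals.
From Stdlib Require Import Lra Psatz Classical FunctionalExtensionality ProofIrrelevance Arith Lia.
Import Defs.
Open Scope R_scope.

Lemma C_ext a b : Cre a = Cre b -> Cim a = Cim b -> a = b.
Proof. destruct a, b; simpl; intros -> ->; reflexivity. Qed.

Ltac Csolve := apply C_ext; simpl; ring.

Lemma l2_ext (x y : l2) : (forall n, proj1_sig x n = proj1_sig y n) -> x = y.
Proof.
  destruct x as [x px], y as [y py]; simpl; intros H.
  assert (x = y) by (apply functional_extensionality; exact H). subst.
  f_equal; apply proof_irrelevance.
Qed.

Definition S2 (x : nat -> C) N := sum_f_R0 (fun n => Cn2 (x n)) N.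
Definition sup2 (x : l2) : R :=
  proj1_sig (completeness _ (proj1 (sq_bound_nonempty _ (proj2_sig x)))
                                  (proj2 (sq_bound_nonempty _ (proj2_sig x)))).

Lemma l2norm_sup x : l2norm x = sqrt (sup2 x).
Proof. reflexivity. Qed.

Lemma S2_le_sup (x : l2) N : S2 (proj1_sig x) N <= sup2 x.
Proof.
  unfold sup2. destruct (completeness _ _ _) as [s [Hs1 Hs2]]. simpl.
  apply Hs1. exists N. reflexivity.
Qed.

Lemma sup_le (x : l2) K : (forall N, S2 (proj1_sig x) N <= K) -> sup2 x <= K.
Proof.
  intros H. unfold sup2. destruct (completeness _ _ _) as [s [Hs1 Hs2]]. simpl.
  apply Hs2. intros r [N ->]. apply H.
Qed.

Lemma S2_ge0 x N : 0 <= S2 x N.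
Proof. unfold S2; induction N; simpl; [apply Cn2_ge0|pose proof (Cn2_ge0 (x (S N))); lra]. Qed.

Lemma sup_ge0 x : 0 <= sup2 x.
Proof. eapply Rle_trans; [apply (S2_ge0 (proj1_sig x) 0)|apply (S2_le_sup x 0)]. Qed.

Lemma l2norm_sq x : l2norm x * l2norm x = sup2 x.
Proof. rewrite l2norm_sup. apply sqrt_sqrt, sup_ge0. Qed.

Lemma l2norm_ge0 x : 0 <= l2norm x.
Proof. apply sqrt_pos. Qed.

Lemma S2_le_norm (x : l2) N : S2 (proj1_sig x) N <= l2norm x * l2norm x.
Proof. rewrite l2norm_sq; apply S2_le_sup. Qed.

Lemma norm_le_of_S2 (y : l2) K : (forall N, S2 (proj1_sig y) N <= K) -> l2norm y * l2norm y <= K.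
Proof. intros; rewrite l2norm_sq; apply sup_le; auto. Qed.

Lemma S2_mono x a b : (a <= b)%nat -> S2 x a <= S2 x b.
Proof.
  induction 1; [lra|]. unfold S2 in *; simpl. pose proof (Cn2_ge0 (x (S m))); lra.
Qed.

Lemma Cn2_le_norm (y : l2) p : Cn2 (proj1_sig y p) <= l2norm y * l2norm y.
Proof.
  eapply Rle_trans; [|apply (S2_le_norm y p)]. unfold S2.
  destruct p; simpl; [lra|]. pose proof (S2_ge0 (proj1_sig y) p); unfold S2 in H; lra.
Qed.

Lemma cmp2 (y a b : l2) c1 c2 : 0 <= c1 -> 0 <= c2 ->
  (forall p, Cn2 (proj1_sig y p) <= c1 * Cn2 (proj1_sig a p) + c2 * Cn2 (proj1_sig b p)) ->
  l2norm y * l2norm y <= c1 * (l2norm a * l2norm a) + c2 * (l2norm b * l2norm b).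
Proof.
  intros h1 h2 H. apply norm_le_of_S2. intros N.
  eapply Rle_trans. { unfold S2. apply (sum_bound _ (fun p => Cn2 (proj1_sig a p)) (fun p => Cn2 (proj1_sig b p)) c1 c2). apply H. }
  pose proof (S2_le_norm a N); pose proof (S2_le_norm b N). unfold S2 in *. nra.
Qed.

Lemma sq_le_imp a b : 0 <= a -> 0 <= b -> a * a <= b * b -> a <= b.
Proof. intros; nra. Qed.

Lemma cmp1 (y a : l2) c : 0 <= c ->
  (forall p, Cn2 (proj1_sig y p) <= (c * c) * Cn2 (proj1_sig a p)) ->
  l2norm y <= c * l2norm a.
Proof.
  intros hc H. apply sq_le_imp; [apply l2norm_ge0| pose proof (l2norm_ge0 a); nra |].
  eapply Rle_trans. apply (cmp2 y a a (c*c) 0); try nra.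
  intros p; specialize (H p); pose proof (Cn2_ge0 (proj1_sig a p)); nra. nra.
Qed.


Section VS.
Variable X : NSpace.
Hypothesis HV : is_vector_space X.

Lemma self_zero (s : X) : vadd s s = s -> s = vzero.
Proof.
  destruct HV as [assoc [comm [idr [oppr _]]]]. intros H.
  assert (vadd (vadd s s) (vopp s) = vadd s (vopp s)) by (rewrite H; reflexivity).
  rewrite <- assoc, oppr, idr in H0. exact H0.
Qed.

Lemma vadd00 : vadd (@vzero X) vzero = vzero.
Proof. destruct HV as [_ [_ [idr _]]]. apply idr. Qed.

Lemma vadd0l (v : X) : vadd vzero v = v.
Proof. destruct HV as [_ [comm [idr _]]]. rewrite comm; apply idr. Qed.

Lemma vscal_zero a : vscal a (@vzero X) = vzero.
Proof.
  apply self_zero. destruct HV as [_ [_ [idr [_ [_ [_ [dist _]]]]]]].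
  rewrite <- dist, idr. reflexivity.
Qed.

Lemma vnorm_zero : is_norm X -> vnorm (@vzero X) = 0.
Proof.
  intros [_ [_ [hom _]]]. rewrite <- (vscal_zero C0), hom.
  unfold Cmod, Cn2, C0; simpl. replace (0*0+0*0) with 0 by ring. rewrite sqrt_0; ring.
Qed.
End VS.

Lemma l2_vs_zero_norm : l2norm (@vzero l2) = 0.
Proof.
  apply Rle_antisym; [|apply l2norm_ge0].
  replace 0 with (0 * l2norm (@vzero l2)) by ring.
  apply cmp1; [lra|]. intros p; simpl. unfold Cn2, C0; simpl; lra.
Qed.

Lemma l2_add0r (x : l2) : vadd x vzero = x.
Proof. apply l2_ext; intros n; simpl. Csolve. Qed.
Lemma l2_add0l (x : l2) : vadd vzero x = x.
Proof. apply l2_ext; intros n; simpl. Csolve. Qed.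

Lemma sqrt_ge_l a b : a <= sqrt (a ^ 2 + b ^ 2).
Proof.
  destruct (Rle_or_lt a 0). { pose proof (sqrt_pos (a^2+b^2)); lra. }
  rewrite <- (sqrt_pow2 a) at 1 by lra. apply sqrt_le_1_alt. pose proof (pow2_ge_0 b); lra.
Qed.

Lemma norm_fst_le {X Y : NSpace} (p : dsum X Y) : vnorm (fst p) <= vnorm p.
Proof. apply sqrt_ge_l. Qed.
Lemma norm_snd_le {X Y : NSpace} (p : dsum X Y) : vnorm (snd p) <= vnorm p.
Proof. change (vnorm (snd p) <= sqrt (vnorm (fst p) ^ 2 + vnorm (snd p) ^ 2)). rewrite Rplus_comm. apply sqrt_ge_l. Qed.

Lemma norm_pair_l {X Y : NSpace} (a : X) (b : Y) : vnorm b = 0 -> 0 <= vnorm a ->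
  vnorm ((a, b) : dsum X Y) = vnorm a.
Proof. intros Hb Ha. change (sqrt (vnorm a ^ 2 + vnorm b ^ 2) = vnorm a). rewrite Hb. replace (vnorm a ^ 2 + 0 ^ 2) with (vnorm a ^ 2) by ring.
  apply sqrt_pow2; lra. Qed.
Lemma norm_pair_r {X Y : NSpace} (a : X) (b : Y) : vnorm a = 0 -> 0 <= vnorm b ->
  vnorm ((a, b) : dsum X Y) = vnorm b.
Proof. intros Hb Ha. change (sqrt (vnorm a ^ 2 + vnorm b ^ 2) = vnorm b). rewrite Hb. replace (0 ^ 2 + vnorm b ^ 2) with (vnorm b ^ 2) by ring.
  apply sqrt_pow2; lra. Qed.

Lemma dsum_norm_ge0 {X Y : NSpace} (p : dsum X Y) : 0 <= vnorm p.
Proof. apply sqrt_pos. Qed.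

Lemma bound_pos {X Y : NSpace} (f : X -> Y) : (forall x : X, 0 <= vnorm x) -> bounded f ->
  exists M, 0 <= M /\ forall x, vnorm (f x) <= M * vnorm x.
Proof.
  intros H0 [M HM]. exists (Rmax M 0). split; [apply Rmax_r|]. intros x.
  eapply Rle_trans; [apply HM|]. apply Rmult_le_compat_r; [apply H0|apply Rmax_l].
Qed.

Lemma vscal0v (X : NSpace) (HV : is_vector_space X) (v : X) : vscal C0 v = vzero.
Proof.
  apply self_zero; auto. destruct HV as [_ [_ [_ [_ [_ [_ [_ dist2]]]]]]].
  rewrite <- dist2. f_equal. apply C_ext; simpl; ring.
Qed.


Definition Csub a b := Cadd a (Copp b).
Lemma Cring : ring_theory C0 C1 Cadd Cmul Csub Copp (@eq C).
Proof.
  constructor; intros; try Csolve.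
Qed.
Add Ring CRing : Cring.

Fixpoint Cs (L : nat) (g : nat -> C) : C :=
  match L with O => C0 | S L' => Cadd (Cs L' g) (g L') end.

Lemma Cs_ext L f g : (forall j, (j < L)%nat -> f j = g j) -> Cs L f = Cs L g.
Proof. induction L; simpl; intros H; auto. rewrite IHL, H; auto. Qed.

Lemma Cs_zero L : Cs L (fun _ => C0) = C0.
Proof. induction L; simpl; auto. rewrite IHL; ring. Qed.

Lemma Cs_lin L s t f g c :
  Cs L (fun j => Cmul (Cadd (Cmul s (f j)) (Copp (Cmul t (g j)))) (c j)) =
  Cadd (Cmul s (Cs L (fun j => Cmul (f j) (c j)))) (Copp (Cmul t (Cs L (fun j => Cmul (g j) (c j))))).
Proof. induction L; simpl. ring. rewrite IHL. ring. Qed.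

Lemma Cs_scal L s f c :
  Cs L (fun j => Cmul (f j) (Cmul s (c j))) = Cmul s (Cs L (fun j => Cmul (f j) (c j))).
Proof. induction L; simpl. ring. rewrite IHL. ring. Qed.

Lemma Cn2_mul a b : Cn2 (Cmul a b) = Cn2 a * Cn2 b.
Proof. unfold Cn2, Cmul; simpl; ring. Qed.

Lemma Cn2_zero a : Cn2 a = 0 -> a = C0.
Proof. unfold Cn2; destruct a as [x y]; simpl; intros H. apply C_ext; simpl; nra. Qed.

Lemma Cmul_neq0 a b : a <> C0 -> b <> C0 -> Cmul a b <> C0.
Proof.
  intros Ha Hb H. assert (Cn2 (Cmul a b) = 0) by (rewrite H; unfold Cn2, C0; simpl; ring).
  rewrite Cn2_mul in H0. apply Rmult_integral in H0 as [H0|H0]; apply Cn2_zero in H0; auto.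
Qed.

Lemma C1_neq0 : C1 <> C0.
Proof. intros H. injection H. lra. Qed.

Lemma LA : forall N k, (k <= N)%nat -> forall a : nat -> nat -> C,
  exists c : nat -> C, (exists j, (j <= N)%nat /\ c j <> C0) /\
    forall i, (i < k)%nat -> Cs (S N) (fun j => Cmul (a i j) (c j)) = C0.
Proof.
  induction N as [|N IH]; intros k Hk a.
  - exists (fun _ => C1). split. exists 0%nat; split; [lia|apply C1_neq0]. intros; lia.
  - destruct (classic (exists i0, (i0 < k)%nat /\ a i0 (S N) <> C0)) as [[i0 [Hi0 Ha0]]|Hno].
    + set (N1 := S N).
      set (b := fun i j => Cadd (Cmul (a i0 N1) (a i j)) (Copp (Cmul (a i N1) (a i0 j)))).
      set (b' := fun i j => b (if Nat.eqb i i0 then (k-1)%nat else i) j).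
      destruct (IH (k-1)%nat ltac:(lia) b') as [c' [[j0 [Hj0 Hc0]] Hc']].
      set (E := fun i => Cs (S N) (fun j => Cmul (a i j) (c' j))).
      assert (Hb : forall i, Cs (S N) (fun j => Cmul (b i j) (c' j)) =
                     Cadd (Cmul (a i0 N1) (E i)) (Copp (Cmul (a i N1) (E i0)))).
      { intros i. unfold b, E. apply Cs_lin. }
      assert (Hb0 : forall i, (i < k)%nat -> Cs (S N) (fun j => Cmul (b i j) (c' j)) = C0).
      { intros i Hi. destruct (Nat.eq_dec i i0) as [->|Hne].
        - rewrite Hb. ring.
        - destruct (Nat.eq_dec i (k-1)) as [->|Hne2].
          + specialize (Hc' i0 ltac:(lia)). unfold b' in Hc'. rewrite Nat.eqb_refl in Hc'. exact Hc'.
          + specialize (Hc' i ltac:(lia)). unfold b' in Hc'.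
            apply Nat.eqb_neq in Hne. rewrite Hne in Hc'. exact Hc'. }
      exists (fun j => if Nat.eqb j N1 then Copp (E i0) else Cmul (a i0 N1) (c' j)).
      split.
      * exists j0. split; [lia|]. assert (Nat.eqb j0 N1 = false) as -> by (apply Nat.eqb_neq; unfold N1; lia).
        apply Cmul_neq0; auto.
      * intros i Hi. change (Cs (S N1) ?f) with (Cadd (Cs N1 f) (f N1)).
        cbv beta; rewrite Nat.eqb_refl.
        rewrite (Cs_ext _ _ (fun j => Cmul (a i j) (Cmul (a i0 N1) (c' j)))).
        2:{ intros j Hj. assert (Nat.eqb j N1 = false) as -> by (apply Nat.eqb_neq; lia). reflexivity. }
        rewrite Cs_scal. specialize (Hb0 i Hi). rewrite Hb in Hb0. fold (E i).
        change (Cs N1 (fun j => Cmul (a i j) (c' j))) with (E i). rewrite <- Hb0. ring.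
    + exists (fun j => if Nat.eqb j (S N) then C1 else C0). split.
      * exists (S N). rewrite Nat.eqb_refl. split; [lia|apply C1_neq0].
      * intros i Hi. change (Cs (S (S N)) ?f) with (Cadd (Cs (S N) f) (f (S N))).
        cbv beta; rewrite Nat.eqb_refl.
        rewrite (Cs_ext _ _ (fun _ => C0)).
        2:{ intros j Hj. assert (Nat.eqb j (S N) = false) as -> by (apply Nat.eqb_neq; lia). ring. }
        rewrite Cs_zero.
        assert (a i (S N) = C0). { apply NNPP; intros H; apply Hno; eauto. }
        rewrite H; ring.
Qed.


Lemma BL_comp {X Y Z : NSpace} (f : X -> Y) (g : Y -> Z) :
  (forall y : Y, 0 <= vnorm y) -> BL f -> BL g -> BL (fun x => g (f x)).
Proof.
  intros H0 [[fa fs] [M1 HM1]] [[ga gs] Hg].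
  destruct (bound_pos g H0 Hg) as [M2 [HM2 HB2]].
  split. split; intros; [rewrite fa, ga|rewrite fs, gs]; reflexivity.
  exists (M2 * M1). intros x. eapply Rle_trans; [apply HB2|].
  rewrite Rmult_assoc. apply Rmult_le_compat_l; auto.
Qed.

Lemma Cn2_Crs d a : Cn2 (Crs d a) = d * d * Cn2 a.
Proof. unfold Cn2, Crs; simpl; ring. Qed.

Lemma BL_diag d Hd : BL (diag d Hd).
Proof.
  split. split; intros; apply l2_ext; intros n; simpl; Csolve.
  exists 1. intros x. apply cmp1; [lra|]. intros p. simpl. rewrite Cn2_Crs.
  specialize (Hd p). pose proof (Cn2_ge0 (proj1_sig x p)). assert (d p * d p <= 1) by nra. nra.
Qed.

Lemma D2_D1 x : D2 x = D1 (D1 x).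
Proof.
  apply l2_ext; intros n; unfold D1, D2, diag; simpl.
  replace (2 * S n)%nat with (S n + S n)%nat by lia. rewrite pow_add.
  apply C_ext; simpl; rewrite ?Nat.add_0_r; ring.
Qed.

Lemma sum_SS f m : sum_f_R0 f (S (S m)) = sum_f_R0 f m + f (S m) + f (S (S m)).
Proof. reflexivity. Qed.
Definition odd_sel (x : nat -> C) q := x (S (2 * q)).
Definition even_sel (x : nat -> C) q := x (2 * q)%nat.
Definition odd_ins (y : nat -> C) p := if Nat.odd p then y (Nat.div2 p) else C0.
Definition even_ins (y : nat -> C) p := if Nat.even p then Crs 2 (y (Nat.div2 p)) else C0.

Lemma S2_split x N : S2 (odd_sel x) N + S2 (even_sel x) N = S2 x (S (2 * N)).
Proof.
  induction N.
  - unfold S2, odd_sel, even_sel; simpl. ring.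
  - replace (S (2 * S N)) with (S (S (S (2 * N)))) by lia.
    unfold S2 in *. rewrite sum_SS, <- IHN. simpl sum_f_R0.
    unfold odd_sel, even_sel. replace (2 * S N)%nat with (S (S (2 * N))) by lia. ring.
Qed.

Lemma S2_odd_sel x N : S2 (odd_sel x) N <= S2 x (S (2 * N)).
Proof. rewrite <- S2_split. pose proof (S2_ge0 (even_sel x) N); lra. Qed.
Lemma S2_even_sel x N : S2 (even_sel x) N <= S2 x (S (2 * N)).
Proof. rewrite <- S2_split. pose proof (S2_ge0 (odd_sel x) N); lra. Qed.

Lemma odd_double M : Nat.odd (2 * M) = false.
Proof. rewrite <- Nat.negb_even, Nat.even_even. reflexivity. Qed.
Lemma odd_sdouble M : Nat.odd (S (2 * M)) = true.
Proof. rewrite Nat.odd_succ, Nat.even_even. reflexivity. Qed.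
Lemma even_sdouble M : Nat.even (S (2 * M)) = false.
Proof. rewrite Nat.even_succ, odd_double. reflexivity. Qed.

Lemma S2_odd_ins y M : S2 (odd_ins y) (S (2 * M)) = S2 y M.
Proof.
  induction M.
  - unfold S2, odd_ins; simpl. unfold Cn2, C0; simpl; ring.
  - replace (S (2 * S M)) with (S (S (S (2 * M)))) by lia.
    unfold S2 in *. rewrite sum_SS, IHM.
    unfold odd_ins. replace (S (S (2 * M))) with (2 * S M)%nat by lia.
    rewrite odd_double, odd_sdouble, Nat.div2_succ_double. unfold Cn2, C0; simpl; ring.
Qed.

Lemma S2_even_ins y M : S2 (even_ins y) (S (2 * M)) = 4 * S2 y M.
Proof.
  induction M.
  - unfold S2, even_ins; simpl. unfold Cn2, C0, Crs; simpl; ring.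
  - replace (S (2 * S M)) with (S (S (S (2 * M)))) by lia.
    unfold S2 in *. rewrite sum_SS, IHM.
    unfold even_ins. replace (S (S (2 * M))) with (2 * S M)%nat by lia.
    rewrite Nat.even_even, even_sdouble, Nat.div2_double. unfold Cn2, C0, Crs; simpl; ring.
Qed.

Lemma S2_odd_ins_le y N : S2 (odd_ins y) N <= S2 y N.
Proof. rewrite <- (S2_odd_ins y N). apply S2_mono. lia. Qed.
Lemma S2_even_ins_le y N : S2 (even_ins y) N <= 4 * S2 y N.
Proof. rewrite <- (S2_even_ins y N). apply S2_mono. lia. Qed.

Lemma sq_odd_sel x : sq_summable x -> sq_summable (odd_sel x).
Proof. intros [M HM]; exists M; intros N. eapply Rle_trans; [apply S2_odd_sel|apply HM]. Qed.
Lemma sq_even_sel x : sq_summable x -> sq_summable (even_sel x).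
Proof. intros [M HM]; exists M; intros N. eapply Rle_trans; [apply S2_even_sel|apply HM]. Qed.
Lemma sq_odd_ins x : sq_summable x -> sq_summable (odd_ins x).
Proof. intros [M HM]; exists M; intros N. eapply Rle_trans; [apply S2_odd_ins_le|apply HM]. Qed.
Lemma sq_even_ins x : sq_summable x -> sq_summable (even_ins x).
Proof. intros [M HM]; exists (4*M); intros N. eapply Rle_trans; [apply S2_even_ins_le|]. specialize (HM N). unfold S2 in *. lra. Qed.

Definition OS : l2 -> l2 := fun x => exist _ _ (sq_odd_sel _ (proj2_sig x)).
Definition ES : l2 -> l2 := fun x => exist _ _ (sq_even_sel _ (proj2_sig x)).
Definition OI : l2 -> l2 := fun x => exist _ _ (sq_odd_ins _ (proj2_sig x)).
Definition EI : l2 -> l2 := fun x => exist _ _ (sq_even_ins _ (proj2_sig x)).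

Lemma BL_OS : BL OS.
Proof.
  split. split; intros; apply l2_ext; intros n; reflexivity.
  exists 1. intros x. change (@vnorm l2) with l2norm. apply sq_le_imp; [apply l2norm_ge0|pose proof (l2norm_ge0 x); lra|].
  rewrite Rmult_1_l. apply norm_le_of_S2. intros N. eapply Rle_trans; [apply S2_odd_sel|apply S2_le_norm].
Qed.
Lemma BL_ES : BL ES.
Proof.
  split. split; intros; apply l2_ext; intros n; reflexivity.
  exists 1. intros x. change (@vnorm l2) with l2norm. apply sq_le_imp; [apply l2norm_ge0|pose proof (l2norm_ge0 x); lra|].
  rewrite Rmult_1_l. apply norm_le_of_S2. intros N. eapply Rle_trans; [apply S2_even_sel|apply S2_le_norm].
Qed.
Lemma BL_OI : BL OI.
Proof.
  split. split; intros; apply l2_ext; intros n; simpl; unfold odd_ins; simpl;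
    destruct (Nat.odd n); simpl; try reflexivity; Csolve.
  exists 1. intros x. change (@vnorm l2) with l2norm. apply sq_le_imp; [apply l2norm_ge0|pose proof (l2norm_ge0 x); lra|].
  rewrite Rmult_1_l. apply norm_le_of_S2. intros N. eapply Rle_trans; [apply S2_odd_ins_le|apply S2_le_norm].
Qed.
Lemma BL_EI : BL EI.
Proof.
  split. split; intros; apply l2_ext; intros n; simpl; unfold even_ins; simpl;
    destruct (Nat.even n); simpl; try reflexivity; Csolve.
  exists 2. intros x. change (@vnorm l2) with l2norm. apply sq_le_imp; [apply l2norm_ge0|pose proof (l2norm_ge0 x); lra|].
  apply norm_le_of_S2. intros N. eapply Rle_trans; [apply S2_even_ins_le|].
  pose proof (S2_le_norm x N). lra.
Qed.

Lemma D1_decomp x : D1 x = vadd (OI (D2 (OS x))) (EI (D2 (ES x))).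
Proof.
  apply l2_ext; intros p. unfold D1, D2, diag, OI, EI, OS, ES; simpl.
  unfold odd_ins, even_ins, odd_sel, even_sel.
  destruct (Nat.Even_or_Odd p) as [[q ->]|[q ->]].
  - rewrite odd_double, Nat.even_even, Nat.div2_double.
    replace (2 * S q)%nat with (S (S (2 * q))) by lia. apply C_ext; simpl; rewrite ?Nat.add_0_r, ?Nat.add_succ_r; simpl pow; field.
  - replace (2 * q + 1)%nat with (S (2 * q)) by lia.
    rewrite odd_sdouble, even_sdouble, Nat.div2_succ_double.
    replace (2 * S q)%nat with (S (S (2 * q))) by lia. apply C_ext; simpl; rewrite ?Nat.add_0_r, ?Nat.add_succ_r; simpl pow; ring.
Qed.

Section VSum.
Variable Z : NSpace.
Hypothesis HV : is_vector_space Z.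

Lemma vsum_ext n (f g : nat -> Z) : (forall j, (j < n)%nat -> f j = g j) -> vsum n f = vsum n g.
Proof. induction n; simpl; intros H; auto. rewrite IHn, H; auto. Qed.

Lemma rearr (a b c d : Z) : vadd (vadd a b) (vadd c d) = vadd (vadd a c) (vadd b d).
Proof.
  destruct HV as [assoc [comm _]].
  rewrite <- !assoc. f_equal. rewrite !assoc. f_equal. apply comm.
Qed.

Lemma vsum_add n (f g : nat -> Z) :
  vsum n (fun j => vadd (f j) (g j)) = vadd (vsum n f) (vsum n g).
Proof.
  induction n; simpl.
  - symmetry. apply vadd00; auto.
  - rewrite IHn. apply rearr.
Qed.

Lemma vsum_plus n m (h : nat -> Z) :
  vsum (n + m) h = vadd (vsum n h) (vsum m (fun l => h (n + l)%nat)).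
Proof.
  destruct HV as [assoc [comm [idr _]]].
  induction m; simpl.
  - rewrite Nat.add_0_r, idr. reflexivity.
  - rewrite Nat.add_succ_r. simpl. rewrite IHm, assoc. reflexivity.
Qed.
End VSum.

Lemma l2_nonneg : forall y : l2, 0 <= vnorm y.
Proof. intros; apply l2norm_ge0. Qed.

Theorem part1 : same_ideal D1 D2.
Proof.
  intros Z1 Z2 HZ1 HZ2 U. destruct HZ2 as [HV2 _]. split.
  - intros [n [R [R' [HBL HU]]]].
    exists (n + n)%nat,
      (fun l => if Nat.ltb l n then (fun y => R l (OI y)) else (fun y => R (l - n)%nat (EI y))),
      (fun l => if Nat.ltb l n then (fun z => OS (R' l z)) else (fun z => ES (R' (l - n)%nat z))).
    split.
    + intros j Hj. destruct (Nat.ltb j n) eqn:E.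
      * apply Nat.ltb_lt in E. destruct (HBL j E).
        split; apply BL_comp; auto using l2_nonneg, BL_OI, BL_OS.
      * apply Nat.ltb_ge in E. destruct (HBL (j - n)%nat ltac:(lia)).
        split; apply BL_comp; auto using l2_nonneg, BL_EI, BL_ES.
    + intros z. rewrite HU. rewrite vsum_plus by auto.
      rewrite (vsum_ext _ n _ (fun j => vadd (R j (OI (D2 (OS (R' j z))))) (R j (EI (D2 (ES (R' j z))))))).
      2:{ intros j Hj. rewrite D1_decomp. destruct (HBL j Hj) as [[[la _] _] _]. apply la. }
      rewrite vsum_add by auto. f_equal.
      * apply vsum_ext. intros j Hj. assert (Nat.ltb j n = true) as -> by (apply Nat.ltb_lt; lia). reflexivity.
      * apply vsum_ext. intros j Hj. assert (Nat.ltb (n + j) n = false) as -> by (apply Nat.ltb_ge; lia).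
        replace (n + j - n)%nat with j by lia. reflexivity.
  - intros [n [R [R' [HBL HU]]]].
    exists n, R, (fun j z => D1 (R' j z)). split.
    + intros j Hj. destruct (HBL j Hj). split; auto. apply BL_comp; auto using l2_nonneg, BL_diag. apply BL_diag.
    + intros z. rewrite HU. apply vsum_ext. intros j _. rewrite D2_D1. reflexivity.
Qed.


Lemma pow_anti h a b : 0 <= h <= 1 -> (a <= b)%nat -> h ^ b <= h ^ a.
Proof.
  intros Hh. induction 1; [lra|]. simpl.
  pose proof (pow_le h m (proj1 Hh)). nra.
Qed.

Lemma fin_supp x M : (forall q, (M < q)%nat -> x q = C0) -> sq_summable x.
Proof.
  intros H. exists (S2 x M). intros N. fold (S2 x N). induction N.
  - apply S2_mono; lia.
  - destruct (le_lt_dec (S N) M). apply S2_mono; auto.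
    unfold S2 in *; simpl. rewrite H by lia. replace (Cn2 C0) with 0 by (unfold Cn2, C0; simpl; ring). lra.
Qed.

Lemma ev_supp p : forall q, (p < q)%nat -> (fun q => if Nat.eqb q p then C1 else C0) q = C0.
Proof. intros q Hq. cbv beta. assert (Nat.eqb q p = false) as -> by (apply Nat.eqb_neq; lia). reflexivity. Qed.

Definition ev (p : nat) : l2 :=
  exist _ (fun q => if Nat.eqb q p then C1 else C0) (fin_supp _ p (ev_supp p)).

Lemma coord_vsum L (f : nat -> l2) p : proj1_sig (vsum L f) p = Cs L (fun j => proj1_sig (f j) p).
Proof. induction L; simpl; auto. rewrite IHL. reflexivity. Qed.

Lemma fst_vsum {X Y : NSpace} L (g : nat -> dsum X Y) : fst (vsum L g) = vsum L (fun j => fst (g j)).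
Proof. induction L; simpl; auto. rewrite IHL. reflexivity. Qed.

Lemma vsum_S (Z : NSpace) L (g : nat -> Z) : vsum (S L) g = vadd (vsum L g) (g L).
Proof. reflexivity. Qed.

Section Lin.
Variable X' Y' : NSpace.
Hypothesis HX : is_vector_space X'.
Hypothesis HY : is_vector_space Y'.

Lemma pair_vsum L (f : nat -> l2) :
  ((vsum L f, vzero) : dsum l2 X') = vsum L (fun j => ((f j, vzero) : dsum l2 X')).
Proof.
  induction L; [reflexivity|]. rewrite (vsum_S (dsum l2 X')), <- IHL. unfold dsum; cbn [vadd fst snd]. rewrite vadd00; auto.
Qed.

Lemma lin_zero (F : dsum l2 X' -> dsum l2 Y') : linear F -> F vzero = vzero.
Proof.
  intros [_ Fs].
  assert (H : (vzero : dsum l2 X') = vscal C0 vzero).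
  { simpl. f_equal. apply l2_ext; intros; simpl; Csolve. rewrite vscal_zero; auto. }
  rewrite H, Fs. simpl. f_equal. apply l2_ext; intros; simpl; Csolve. apply vscal0v; auto.
Qed.

Lemma lin_vsum (F : dsum l2 X' -> dsum l2 Y') L g : linear F ->
  F (vsum L g) = vsum L (fun j => F (g j)).
Proof.
  intros HF. induction L. apply lin_zero; auto.
  destruct HF as [Fa _]. rewrite (vsum_S (dsum l2 X')), Fa, IHL. reflexivity.
Qed.

Lemma pair_scal c (e : l2) : ((vscal c e, vzero) : dsum l2 X') = vscal c ((e, vzero) : dsum l2 X').
Proof. simpl. rewrite vscal_zero; auto. Qed.
End Lin.


Lemma D1_coord y p : proj1_sig (D1 y) p = Crs ((/2) ^ (S p)) (proj1_sig y p).
Proof. reflexivity. Qed.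
Lemma D2_coord y p : proj1_sig (D2 y) p = Crs ((/2) ^ (2 * S p)) (proj1_sig y p).
Proof. reflexivity. Qed.

Lemma Cn2_add_le a b : Cn2 (Cadd a b) <= 2 * Cn2 a + 2 * Cn2 b.
Proof.
  unfold Cn2, Cadd; simpl.
  pose proof (pow2_ge_0 (Cre a - Cre b)); pose proof (pow2_ge_0 (Cim a - Cim b)); nra.
Qed.

Lemma Cn2_C0 : Cn2 C0 = 0.
Proof. unfold Cn2, C0; simpl; ring. Qed.

Lemma q_le q X : 1 <= q -> 0 <= X -> X <= (q * q) * X.
Proof. intros. assert (1 <= q * q) by nra. rewrite <- (Rmult_1_l X) at 1. apply Rmult_le_compat_r; auto. Qed.

Theorem part2 : ~ equiv_after_ext D1 D2.
Proof.
  intros [X' [Y' [HX' [HY' [E [F [HE [HF Hyp]]]]]]]].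
  destruct HX' as [VX [NX _]]. destruct HY' as [VY [NY _]].
  destruct HE as [[[Ea Es] EB] [Hh [[_ HhB] [HhE EHh]]]].
  destruct HF as [[[Fa Fs] FB] [G [[_ GB] [GF FG]]]].
  destruct (bound_pos E (fun x => dsum_norm_ge0 x) EB) as [ME [ME0 HME]].
  destruct (bound_pos F (fun x => dsum_norm_ge0 x) FB) as [MF [MF0 HMF]].
  destruct (bound_pos Hh (fun x => dsum_norm_ge0 x) HhB) as [MH [MH0 HMH]].
  destruct (bound_pos G (fun x => dsum_norm_ge0 x) GB) as [MG [MG0 HMG]].
  assert (NX0 : vnorm (@vzero X') = 0) by (apply vnorm_zero; auto).
  assert (NY0 : vnorm (@vzero Y') = 0) by (apply vnorm_zero; auto).
  assert (NYp : forall y : Y', 0 <= vnorm y) by apply NY.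
  set (h := / 2). assert (Hh0 : 0 < h < 1) by (unfold h; lra).
  assert (Hh1 : 0 <= h <= 1) by lra.
  assert (Habs : Rabs h < 1) by (rewrite Rabs_right; lra).
  set (K := MG * MH). assert (K0 : 0 <= K) by (unfold K; nra).
  destruct (pow_lt_1_zero h Habs (/ (4 * (K * K + 1)))) as [n Hn].
  { apply Rinv_0_lt_compat; nra. }
  assert (Hn' : h ^ (S n) < / (4 * (K * K + 1))).
  { specialize (Hn (S n) ltac:(lia)). rewrite Rabs_right in Hn; auto. apply Rle_ge, pow_le; lra. }
  assert (Hpn : 0 < h ^ n) by (apply pow_lt; lra).
  destruct (pow_lt_1_zero h Habs (h ^ n / (2 * ME * MF + 1))) as [k Hk].
  { apply Rdiv_lt_0_compat; nra. }
  assert (Hk' : h ^ (S k) < h ^ n / (2 * ME * MF + 1)).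
  { specialize (Hk (S k) ltac:(lia)). rewrite Rabs_right in Hk; auto. apply Rle_ge, pow_le; lra. }
  set (a := fun i j => proj1_sig (fst (F (ev (n + j), vzero))) i).
  destruct (LA k k (Nat.le_refl k) a) as [c [[j0 [Hj0 Hc0]] Hc]].
  set (x := vsum (S k) (fun j => vscal (c j) (ev (n + j))) : l2).
  assert (Hxc : forall p, proj1_sig x p = Cs (S k) (fun j => Cmul (c j) (if Nat.eqb p (n + j) then C1 else C0))).
  { intros p. unfold x. rewrite coord_vsum. reflexivity. }
  assert (HX1 : forall p, (p < n \/ n + k < p)%nat -> proj1_sig x p = C0).
  { intros p Hp. rewrite Hxc. transitivity (Cs (S k) (fun _ => C0)); [|apply Cs_zero]. apply Cs_ext. intros j Hj.
    assert (Nat.eqb p (n + j) = false) as -> by (apply Nat.eqb_neq; lia). cbv iota. ring. }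
  assert (HX3 : proj1_sig x (n + j0)%nat = c j0).
  { rewrite Hxc. assert (forall L, (j0 < L)%nat -> (L <= S k)%nat ->
      Cs L (fun j => Cmul (c j) (if Nat.eqb (n + j0) (n + j) then C1 else C0)) = c j0) as HL.
    { induction L; intros H1 H2; [lia|]. simpl.
      destruct (Nat.eq_dec j0 L) as [->|Hne].
      - rewrite Nat.eqb_refl. rewrite (Cs_ext _ _ (fun _ => C0)). rewrite Cs_zero. ring.
        intros j Hj. assert (Nat.eqb (n + L) (n + j) = false) as -> by (apply Nat.eqb_neq; lia). cbv iota. ring.
      - rewrite IHL by lia. assert (Nat.eqb (n + j0) (n + L) = false) as -> by (apply Nat.eqb_neq; lia). cbv iota. ring. }
    apply HL; lia. }
  assert (Hu : forall i, (i < k)%nat -> proj1_sig (fst (F (x, vzero))) i = C0).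
  { intros i Hi. unfold x. rewrite pair_vsum by auto. rewrite lin_vsum by (auto; split; auto).
    rewrite fst_vsum, coord_vsum. rewrite <- (Hc i Hi). apply Cs_ext. intros j Hj.
    rewrite pair_scal by auto. rewrite Fs. change (Cmul (c j) (a i j) = Cmul (a i j) (c j)). ring. }

  set (p0 := ((x, vzero) : dsum l2 X')).
  set (u := fst (F p0)). set (v := snd (F p0)).
  assert (Hu2 : forall i, (i < k)%nat -> proj1_sig u i = C0) by exact Hu.
  assert (H1 : ((D1 x, vzero) : dsum l2 X') = E ((D2 u, v) : dsum l2 Y')) by exact (Hyp p0).
  assert (Hv : vnorm v <= MH * l2norm (D1 x)).
  { assert (Hq : Hh ((D1 x, vzero) : dsum l2 X') = ((D2 u, v) : dsum l2 Y')) by (rewrite H1; apply HhE).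
    eapply Rle_trans; [apply (norm_snd_le ((D2 u, v) : dsum l2 Y'))|]. rewrite <- Hq.
    eapply Rle_trans; [apply HMH|]. rewrite norm_pair_l; [change (@vnorm l2) with l2norm; lra|auto|apply l2norm_ge0]. }
  assert (Hdec : ((D2 u, v) : dsum l2 Y') = vadd ((D2 u, vzero) : dsum l2 Y') ((vzero, v) : dsum l2 Y')).
  { unfold dsum; cbn [vadd fst snd]. f_equal. symmetry; apply l2_add0r. symmetry; apply vadd0l; auto. }
  assert (D2z : D2 vzero = vzero) by (apply l2_ext; intros; simpl; Csolve).
  assert (HE0 : E ((vzero, v) : dsum l2 Y') = ext_op D1 (G (vzero, v))).
  { rewrite (Hyp (G (vzero, v))), FG. unfold ext_op; simpl fst; simpl snd. f_equal; f_equal; symmetry; exact D2z. }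
  set (w := fst (G (vzero, v))). set (aa := fst (E ((D2 u, vzero) : dsum l2 Y'))).
  assert (Hfx : D1 x = vadd aa (D1 w)).
  { change (D1 x) with (fst ((D1 x, vzero) : dsum l2 X')). rewrite H1, Hdec, Ea, HE0. reflexivity. }
  assert (Hcoord : forall p, proj1_sig (D1 x) p = Cadd (proj1_sig aa p) (proj1_sig (D1 w) p)).
  { intros p. rewrite Hfx. reflexivity. }
  assert (Hw : l2norm w <= MG * vnorm v).
  { eapply Rle_trans; [apply (norm_fst_le (G (vzero, v)))|]. eapply Rle_trans; [apply HMG|].
    rewrite norm_pair_r; [lra|apply l2_vs_zero_norm|auto]. }
  assert (Ha : l2norm aa <= ME * l2norm (D2 u)).
  { eapply Rle_trans; [apply (norm_fst_le (E ((D2 u, vzero) : dsum l2 Y')))|]. eapply Rle_trans; [apply HME|].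
    rewrite norm_pair_l; [change (@vnorm l2) with l2norm; lra|auto|apply l2norm_ge0]. }
  assert (HuF : l2norm u <= MF * l2norm x).
  { eapply Rle_trans; [apply (norm_fst_le (F p0))|]. eapply Rle_trans; [apply HMF|].
    unfold p0. rewrite norm_pair_l; [change (@vnorm l2) with l2norm; lra|auto|apply l2norm_ge0]. }
  set (t := h ^ (S k)). set (s := h ^ (S n)). set (hn := h ^ n).
  assert (Ht0 : 0 < t) by (apply pow_lt; lra).
  assert (Hs0 : 0 < s) by (apply pow_lt; lra).
  assert (Hs1 : s <= 1) by (unfold s; change 1 with (h ^ 0); apply pow_anti; [lra|lia]).
  assert (HD2u : l2norm (D2 u) <= (t * t) * l2norm u).
  { apply cmp1. nra. intros p. rewrite D2_coord, Cn2_Crs. pose proof (Cn2_ge0 (proj1_sig u p)).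
    destruct (lt_dec p k) as [Hp|Hp].
    - rewrite (Hu2 p Hp), Cn2_C0. nra.
    - assert (Hd : (/2) ^ (2 * S p) <= t * t).
      { unfold t, h. rewrite <- pow_add. apply pow_anti; [lra|lia]. }
      assert (0 <= (/2) ^ (2 * S p)) by (apply pow_le; lra).
      apply Rmult_le_compat_r; auto. apply Rmult_le_compat; auto. }
  assert (Hpow : h ^ (S (n + k)) = hn * t) by (unfold hn, t; rewrite <- pow_add; f_equal; lia).
  assert (Hanti : forall a b, (a <= b)%nat -> (/2) ^ b <= (/2) ^ a) by (intros; apply pow_anti; [lra|auto]).
  assert (Hpos : forall a, 0 < (/2) ^ a) by (intros; apply pow_lt; lra).
  assert (Hsn : forall p, (n <= p)%nat -> (/2) ^ (S p) <= s) by (intros; apply Hanti; lia).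
  assert (Hhn : 0 < hn) by (unfold hn; apply pow_lt; lra).
  assert (Hxlow : l2norm x <= / (hn * t) * l2norm (D1 x)).
  { apply cmp1. left; apply Rinv_0_lt_compat; nra. intros p. rewrite D1_coord, Cn2_Crs.
    pose proof (Cn2_ge0 (proj1_sig x p)).
    destruct (classic ((p < n)%nat \/ (n + k < p)%nat)) as [Hp|Hp].
    - rewrite (HX1 p Hp), Cn2_C0. nra.
    - assert (Hd : hn * t <= (/2) ^ (S p)).
      { rewrite <- Hpow. apply pow_anti; [lra|lia]. }
      assert (Hcd : 1 <= / (hn * t) * (/2) ^ (S p)).
      { apply (Rmult_le_reg_l (hn * t)); [nra|]. rewrite <- Rmult_assoc, Rinv_r by nra. nra. }
      replace (/ (hn * t) * / (hn * t) * ((/ 2) ^ S p * (/ 2) ^ S p * Cn2 (proj1_sig x p))) with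
        ((/ (hn * t) * (/ 2) ^ S p) * (/ (hn * t) * (/ 2) ^ S p) * Cn2 (proj1_sig x p)) by ring.
      apply q_le; auto. }
  assert (Hmain : l2norm (D1 x) * l2norm (D1 x) <=
                  2 * (l2norm aa * l2norm aa) + (2 * (s * s)) * (l2norm w * l2norm w)).
  { apply cmp2; [lra|nra|]. intros p.
    pose proof (Cn2_ge0 (proj1_sig aa p)). pose proof (Cn2_ge0 (proj1_sig w p)).
    destruct (lt_dec p n) as [Hp|Hp].
    - rewrite D1_coord, (HX1 p (or_introl Hp)), Cn2_Crs, Cn2_C0. nra.
    - rewrite Hcoord. eapply Rle_trans; [apply Cn2_add_le|]. rewrite D1_coord, Cn2_Crs.
      assert (Hd : (/2) ^ (S p) <= s) by (apply pow_anti; [lra|lia]).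
      assert (0 <= (/2) ^ (S p)) by (apply pow_le; lra).
      assert ((/2) ^ (S p) * (/2) ^ (S p) <= s * s) by nra.
      assert ((/2) ^ (S p) * (/2) ^ (S p) * Cn2 (proj1_sig w p) <= s * s * Cn2 (proj1_sig w p))
        by (apply Rmult_le_compat_r; auto). lra. }
  assert (HDpos : 0 < l2norm (D1 x) * l2norm (D1 x)).
  { eapply Rlt_le_trans; [|apply (Cn2_le_norm (D1 x) (n + j0))]. rewrite D1_coord, HX3, Cn2_Crs.
    assert (0 < Cn2 (c j0)).
    { destruct (Cn2_ge0 (c j0)) as [H|H]; auto. exfalso; apply Hc0, Cn2_zero; auto. }
    assert (0 < (/2) ^ (S (n + j0))) by (apply pow_lt; lra).
    apply Rmult_lt_0_compat; auto. apply Rmult_lt_0_compat; auto. }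
  set (D := l2norm (D1 x)) in *.
  assert (HD0 : 0 <= D) by apply l2norm_ge0.
  assert (HDp : 0 < D) by nra.
  assert (Hw2 : l2norm w <= K * D) by (unfold K; pose proof (l2norm_ge0 w); nra).
  assert (Hsmall : 2 * (s * s) * (K * K) <= / 2).
  { assert (s * (4 * (K * K + 1)) < 1).
    { apply (Rmult_lt_compat_r (4 * (K * K + 1))) in Hn'; [|nra].
      rewrite Rinv_l in Hn' by nra. exact Hn'. }
    nra. }
  assert (HDa : D <= 2 * l2norm aa).
  { pose proof (l2norm_ge0 aa). pose proof (l2norm_ge0 w).
    assert (l2norm w * l2norm w <= (K * D) * (K * D)) by nra.
    assert (D * D <= 4 * (l2norm aa * l2norm aa)) by nra. nra. }
  pose proof (l2norm_ge0 u). pose proof (l2norm_ge0 x). pose proof (l2norm_ge0 (D2 u)).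
  assert (Hchain : D <= 2 * ME * MF * (t * t) * (/ (hn * t) * D)).
  { eapply Rle_trans; [apply HDa|].
    assert (l2norm aa <= ME * ((t * t) * (MF * l2norm x))).
    { eapply Rle_trans; [apply Ha|]. apply Rmult_le_compat_l; auto.
      eapply Rle_trans; [apply HD2u|]. apply Rmult_le_compat_l; nra. }
    assert (ME * ((t * t) * (MF * l2norm x)) <= ME * ((t * t) * (MF * (/ (hn * t) * D)))).
    { apply Rmult_le_compat_l; auto. apply Rmult_le_compat_l; [nra|]. apply Rmult_le_compat_l; auto. }
    nra. }
  assert (Hfin : hn <= 2 * ME * MF * t).
  { replace (2 * ME * MF * (t * t) * (/ (hn * t) * D)) with ((2 * ME * MF * t / hn) * D) in Hchain
      by (field; nra).
    assert (H5 : 1 <= 2 * ME * MF * t / hn).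
    { apply (Rmult_le_reg_r D); nra. }
    apply (Rmult_le_compat_r hn) in H5; [|lra].
    unfold Rdiv in H5. rewrite Rmult_assoc, Rinv_l in H5 by lra. lra. }
  assert ((2 * ME * MF + 1) * t < hn).
  { apply (Rmult_lt_compat_l (2 * ME * MF + 1)) in Hk'; [|nra].
    unfold hn. replace ((2 * ME * MF + 1) * (h ^ n / (2 * ME * MF + 1))) with (h ^ n) in Hk' by (field; nra).
    exact Hk'. }
  nra.
Qed.


Theorem mainTheorem5 : same_ideal D1 D2 /\ ~ equiv_after_ext D1 D2.
Proof. split; [exact part1|exact part2]. Qed.
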